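(* Let $n\ge1$ and let $\mathfrak{c}=\{c_{ij}\}_{1\le i<j\le n}$, $\mathfrak{\ell}=\{\ell_1,\dots,\ell_n\}$ be integers, with associated Grossberg–Karshon twisted cube $(C(\mathfrak{c},\mathfrak{\ell}),\rho)$ and divisor $D(\mathfrak{c},\mathfrak{\ell})$ on $X(\mathfrak{c})$. (a) If the twisted cube is untwisted, then $C(\mathfrak{c},\mathfrak{\ell})$ is convex and $\ell_k\ge0$ for all $k$. Equivalently, if $D(\mathfrak{c},\mathfrak{\ell})$ is basepoint-free, then it is also effective. (b) If $C(\mathfrak{c},\mathfrak{\ell})$ is convex and $\ell_k>0$ for all $k$, then the twisted cube is untwisted (equivalently, $D(\mathfrak{c},\mathfrak{\ell})$ is basepoint-free).
   Context: Functions on $\mathbb{R}^n$: $A_n(x)=\ell_n$, $A_j(x)=\ell_j-\sum_{k=j+1}^nc_{jk}x_k$ for $1\le j\le n-1$. $C(\mathfrak{c},\mathfrak{\ell})=\{x\in\mathbb{R}^n:$ for each $1\le k\le n$, $A_k(x)<x_k<0$ or $0\le x_k\le A_k(x)\}$; $\rho(x)=(-1)^n\prod_k\mathrm{sgn}(x_k)$ on $C(\mathfrak{c},\mathfrak{\ell})$ and $0$ elsewhere, where $\mathrm{sgn}(t)=1$ for $t<0$ and $-1$ for $t\ge0$. The twisted cube is untwisted if $C(\mathfrak{c},\mathfrak{\ell})$ is closed in $\mathbb{R}^n$ (equivalently, $C(\mathfrak{c},\mathfrak{\ell})=\{x:0\le x_j\le A_j(x)\ \forall j\}$). Toric data: $e_j^+$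 standard basis of $\mathbb{R}^n$, $e_j^-:=-e_j^+-\sum_{k>j}c_{jk}e_k^+$; $\Sigma_{\mathfrak{c}}$ is the complete smooth fan whose cones are generated by subsets of $\{e_1^\pm,\dots,e_n^\pm\}$ not containing any $\{e_j^+,e_j^-\}$; $X(\mathfrak{c})$ is its toric variety; $D(\mathfrak{c},\mathfrak{\ell})=\sum_{j=1}^n\ell_jD_{e_j^-}$ where $D_{e_j^-}$ is the torus-invariant prime divisor of the ray through $e_j^-$. *)

(* Defs.v *)
From HB Require Import structures.
From mathcomp Require Import all_boot all_order all_algebra.
From mathcomp Require Import all_classical all_reals topology normedtype.
Set Implicit Arguments. Unset Strict Implicit. Unset Printing Implicit Defensive.
Import Order.TTheory GRing.Theory Num.Theory.
Import numFieldNormedType.Exports.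
Local Open Scope classical_set_scope.
Local Open Scope ring_scope.

(* Points of R^n are row vectors 'rV[R]_n; coordinate j (0-based, the
   paper's j+1) of x is x ord0 j.  The integer data c_{jk} (only j < k is
   used) and l_j are functions on 'I_n. *)

Definition Afun (R : realType) (n : nat) (c : 'I_n -> 'I_n -> int)
  (l : 'I_n -> int) (x : 'rV[R]_n) (j : 'I_n) : R :=
  (l j)%:~R - \sum_(k < n | (j < k)%N) (c j k)%:~R * x ord0 k.

Definition twisted_cube (R : realType) (n : nat) (c : 'I_n -> 'I_n -> int)
  (l : 'I_n -> int) : set 'rV[R]_n :=
  [set x | forall k : 'I_n,
      (Afun c l x k < x ord0 k /\ x ord0 k < 0) \/
      (0 <= x ord0 k /\ x ord0 k <= Afun c l x k)].

(* The density function rho (not needed for the statement, given for completeness). *)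
Definition sgn (R : realType) (t : R) : R := if t < 0 then 1 else -1.
Definition rho (R : realType) (n : nat) (c : 'I_n -> 'I_n -> int)
  (l : 'I_n -> int) (x : 'rV[R]_n) : R :=
  if `[< twisted_cube c l x >] then (-1) ^+ n * \prod_(k < n) sgn (x ord0 k)
  else 0.

Definition untwisted (R : realType) (n : nat) (c : 'I_n -> 'I_n -> int)
  (l : 'I_n -> int) : Prop := closed (twisted_cube (R:=R) c l).

Definition convex_set (R : realType) (n : nat) (A : set 'rV[R]_n) : Prop :=
  forall x y, A x -> A y -> forall t : R, 0 <= t -> t <= 1 ->
    A (t *: x + (1 - t) *: y).

(* Main.v *)
Require Import Defs.
From HB Require Import structures.
From mathcomp Require Import all_boot all_order all_algebra.
From mathcomp Require Import all_classical all_reals topology normedtype.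
From mathcomp Require Import ring lra.
Import Order.TTheory GRing.Theory Num.Theory.
Import numFieldNormedType.Exports.
Local Open Scope ring_scope.

Section Helpers.
Local Open Scope classical_set_scope.
Variables (R : realType) (n : nat) (c : 'I_n -> 'I_n -> int) (l : 'I_n -> int).
Notation C := (twisted_cube (R:=R) c l).
Notation A := (Afun c l).

Definition upd (x : 'rV[R]_n) (k : 'I_n) (t : R) : 'rV[R]_n :=
  \row_j (if j == k then t else x ord0 j).

Lemma updE (x : 'rV[R]_n) (k : 'I_n) (t : R) (j : 'I_n) : upd x k t ord0 j = if j == k then t else x ord0 j.
Proof. by rewrite /upd mxE. Qed.

Lemma A_tail (x y : 'rV[R]_n) (j : 'I_n) :
  (forall i : 'I_n, (j < i)%N -> x ord0 i = y ord0 i) -> A x j = A y j.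
Proof. by move=> H; rewrite /Afun; congr (_ - _); apply: eq_bigr => i /H ->. Qed.

Lemma A_comb (x y : 'rV[R]_n) (t : R) (j : 'I_n) :
  A (t *: x + (1 - t) *: y) j = t * A x j + (1 - t) * A y j.
Proof.
rewrite /Afun.
have -> : \sum_(k < n | (j < k)%N) (c j k)%:~R * (t *: x + (1 - t) *: y) ord0 k
  = t * (\sum_(k < n | (j < k)%N) (c j k)%:~R * x ord0 k)
    + (1 - t) * (\sum_(k < n | (j < k)%N) (c j k)%:~R * y ord0 k).
  by rewrite 2!mulr_sumr -big_split; apply: eq_bigr => i _; rewrite !mxE /=; ring.
ring.
Qed.

Lemma A_zero_tail (x : 'rV[R]_n) (j : 'I_n) :
  (forall i : 'I_n, (j < i)%N -> x ord0 i = 0) -> A x j = (l j)%:~R.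
Proof.
move=> H; rewrite /Afun big1 ?subr0 // => i /H ->; by rewrite mulr0.
Qed.

Lemma ext m : forall x : 'rV[R]_n, exists z : 'rV[R]_n,
  (forall j : 'I_n, (m <= j)%N -> z ord0 j = x ord0 j) /\
  (forall j : 'I_n, (j < m)%N -> z ord0 j = A z j / 2).
Proof.
elim: m => [|m IH] x.
  by exists x; split => // j.
case: (ltnP m n) => hm.
  pose km := Ordinal hm.
  have [z [z1 z2]] := IH (upd x km (A x km / 2)).
  exists z; split.
    move=> j hj; rewrite z1 ?updE; last by apply: ltnW.
    have -> : (j == km) = false.
      by apply/negbTE; apply/eqP => e1; move: hj; rewrite e1 /= ltnn.
    by [].
  move=> j; rewrite ltnS leq_eqVlt => /orP [/eqP ejk|hj]; last exact: z2.
  have -> : j = km by apply: val_inj.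
  rewrite z1 /= ?leqnn // updE eqxx; congr (_ / 2).
  apply: A_tail => i hi; rewrite z1 ?updE; last by apply: ltnW.
  have -> : (i == km) = false.
    by apply/negbTE; apply/eqP => e2; move: hi; rewrite e2 /= ltnn.
  by [].
have [z [z1 z2]] := IH x.
exists z; split.
  by move=> j hj; apply: z1; apply: ltnW.
move=> j _; apply: z2; exact: leq_trans (ltn_ord j) hm.
Qed.

Lemma fiber_ok (a B : R) : a = B / 2 -> (B < a /\ a < 0) \/ (0 <= a /\ a <= B).
Proof. move=> ->; case: (ltP B 0) => h; [left|right]; split; lra. Qed.


Lemma zero_in : (forall k, (0 <= l k)%R) -> C 0.
Proof.
move=> hl k; right; rewrite mxE; split => //.
rewrite A_zero_tail ?ler0z // => i _; by rewrite mxE.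
Qed.

Lemma C_coord (x : 'rV[R]_n) (t : R) (j : 'I_n) : (t *: x) ord0 j = t * x ord0 j.
Proof. by rewrite mxE. Qed.

Lemma nonneg_of_convex : convex_set C -> (forall k, (0 < l k)%R) ->
  forall x, C x -> forall k, 0 <= x ord0 k.
Proof.
move=> cv hl x Cx k; rewrite leNgt; apply/negP => xk.
have [[Ax _]|[h _]] := Cx k; last by move: h; rewrite leNgt xk.
have l0 : 0 < ((l k)%:~R : R) by rewrite ltr0z.
pose d := (l k)%:~R - A x k.
have d0 : 0 < d by rewrite /d; lra.
pose s := (l k)%:~R / d.
have sd : s * d = (l k)%:~R by rewrite /s divfK // gt_eqF.
have s0 : 0 < s by rewrite /s divr_gt0.
have s1 : s <= 1 by rewrite /s ler_pdivrMr // mul1r /d; lra.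
have C0 : C 0 by apply: zero_in => j; exact: ltW.
have := cv x 0 Cx C0 s (ltW s0) s1 k.
rewrite A_comb (@A_zero_tail 0); last by move=> i _; rewrite mxE.
rewrite !mxE mulr0 addr0.
have -> : s * A x k + (1 - s) * (l k)%:~R = 0.
  have -> : s * A x k + (1 - s) * (l k)%:~R = (l k)%:~R - s * d by rewrite /d; ring.
  by rewrite sd subrr.
have sx : s * x ord0 k < 0 by rewrite pmulr_rlt0.
case => [[h _]|[h _]]; lra.
Qed.

Definition Cpos := [set x : 'rV[R]_n | forall k, 0 <= x ord0 k /\ x ord0 k <= A x k].

Lemma C_pos_char : (forall x, C x -> forall k, 0 <= x ord0 k) -> C = Cpos.
Proof.
move=> H; apply/seteqP; split => x /=.
  move=> Cx k; have := H x Cx k; case: (Cx k) => [[_ h]|[] //]; lra.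
by move=> Px k; right; apply: Px.
Qed.

Lemma convex_pos : convex_set Cpos.
Proof.
move=> x y Px Py t t0 t1 k; rewrite A_comb !mxE.
have [x0 xA] := Px k; have [y0 yA] := Py k.
have t1' : 0 <= 1 - t by lra.
split; first by rewrite addr_ge0 // mulr_ge0.
by rewrite lerD // ler_wpM2l.
Qed.

Lemma sum_cont (r : seq 'I_n) (P : pred 'I_n) (f : 'I_n -> 'rV[R]_n -> R) :
  (forall i, continuous (f i)) ->
  continuous (fun x => \sum_(i <- r | P i) f i x).
Proof.
move=> hf; elim: r => [|i r IH].
  have -> : (fun x : 'rV[R]_n => \sum_(i <- [::] | P i) f i x) = fun=> 0.
    by apply: funext => x; rewrite big_nil.
  exact: cst_continuous.
have -> : (fun x => \sum_(j <- i :: r | P j) f j x) =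
   (fun x => (if P i then f i x else 0) + \sum_(j <- r | P j) f j x).
  by apply: funext => x; rewrite big_cons; case: (P i) => //; rewrite add0r.
move=> x; apply: cvgD; last exact: IH.
  exact: nbhs_filter.
case: (P i) => /=; first exact: (hf i x).
exact: (@cst_continuous _ _ 0 x).
Qed.

Lemma A_continuous (k : 'I_n) : continuous (fun x : 'rV[R]_n => A x k).
Proof.
have hs : continuous (fun x : 'rV[R]_n =>
    \sum_(i < n | (k < i)%N) (c k i)%:~R * x ord0 i).
  apply: (sum_cont _ _ (fun (i : 'I_n) (x : 'rV[R]_n) => (c k i)%:~R * x ord0 i)).
  move=> i y; apply: continuousM; first exact: cst_continuous.
  exact: coord_continuous.
move=> x; rewrite /Afun; apply: continuousB; first exact: cst_continuous.
exact: hs.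
Qed.

Lemma closed_pos : closed Cpos.
Proof.
have -> : Cpos = \bigcap_(k in [set: 'I_n])
   ([set x : 'rV[R]_n | 0 <= x ord0 k] `&` [set x | 0 <= A x k - x ord0 k]).
  apply/seteqP; split => x /=.
    by move=> Px k _; have [h1 h2] := Px k; split => //=; rewrite subr_ge0.
  by move=> H k; have [h1 h2] := H k Logic.I; split => //; move: h2 => /=; rewrite subr_ge0.
apply: closed_bigI => k _; apply: closedI.
  apply: (@preimage_closed _ _ (fun x : 'rV[R]_n => x ord0 k) [set y | 0 <= y]).
    by move=> y _; exact: coord_continuous.
  exact: closed_ge.
apply: (@preimage_closed _ _ (fun x : 'rV[R]_n => A x k - x ord0 k) [set y | 0 <= y]).
  move=> y _; apply: (@continuousB _ _ _ (fun x : 'rV[R]_n => A x k) (fun x => x ord0 k)).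
    exact: A_continuous.
  exact: coord_continuous.
exact: closed_ge.
Qed.

Lemma nonneg_of_closed : closed C -> forall x, C x -> forall k, 0 <= x ord0 k.
Proof.
move=> cl x Cx k; rewrite leNgt; apply/negP => xk.
have [[Ax _]|[h _]] := Cx k; last by move: h; rewrite leNgt xk.
have [u [u1 u2]] := ext k (upd x k 0).
have [w [w1 w2]] := ext k x.
have ux : forall i : 'I_n, (k < i)%N -> u ord0 i = x ord0 i.
  move=> i hi; rewrite u1 ?updE; last exact: ltnW.
  have -> : (i == k) = false.
    by apply/negbTE; apply/eqP => e3; move: hi; rewrite e3 ltnn.
  by [].
have uk : u ord0 k = 0 by rewrite u1 // updE eqxx.
have wk : w ord0 k = x ord0 k by rewrite w1.
have Au : A u k = A x k by apply: A_tail.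
pose f := fun s : R => s *: w + (1 - s) *: u.
have fE s j : f s ord0 j = s * w ord0 j + (1 - s) * u ord0 j by rewrite /f !mxE.
have hfx s : forall i : 'I_n, (k < i)%N -> f s ord0 i = x ord0 i.
  move=> i hi; rewrite fE ux // w1; last exact: ltnW.
  ring.
have Cf : forall s, 0 < s -> s <= 1 -> C (f s).
  move=> s s0 s1 j; case: (ltngtP j k) => hj.
  - apply: fiber_ok; rewrite /f A_comb !mxE (u2 j hj) (w2 j hj) /=; ring.
  - rewrite hfx // (@A_tail (f s) x j); first exact: Cx.
    by move=> i hi; apply: hfx; exact: ltn_trans hj hi.
  - have -> : j = k by apply: val_inj.
    rewrite (@A_tail (f s) x k); last exact: hfx.
    rewrite fE wk uk; left; split; nra.
have u_notC : ~ C u.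
  by move=> Cu; case: (Cu k) => [[_ h]|[_ h]]; move: h; rewrite uk ?Au; lra.
apply: u_notC.
have fc : {for 0, continuous f}.
  rewrite /f.
  apply: (@continuousD _ _ _ (fun s : R => s *: w) (fun s : R => (1 - s) *: u)).
    apply: continuousZr_tmp; exact: cvg_id.
  apply: continuousZr_tmp.
  rewrite /continuous_at; apply: cvgB; [exact: cvg_cst | exact: cvg_id].
have fu : f 0 = u by rewrite /f scale0r add0r subr0 scale1r.
apply: (@closed_cvg _ _ (0:R)^'+ _ f C cl _ u).
  near=> s; apply: Cf.
    by near: s; exact: nbhs_right_gt.
  by apply: ltW; near: s; apply: nbhs_right_lt; exact: ltr01.
rewrite -fu; apply: cvg_at_right_filter; exact: fc.
Unshelve. all: by end_near.
Qed.

Lemma l_step : (forall x, C x -> forall k, 0 <= x ord0 k) ->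
  forall k : 'I_n, (forall j : 'I_n, (k < j)%N -> (0 <= l j)%R) -> (0 <= l k)%R.
Proof.
move=> H k hj; rewrite leNgt; apply/negP => lk.
have lk' : ((l k)%:~R : R) < 0 by rewrite ltrz0.
have [z [z1 z2]] := ext k (upd 0 k ((l k)%:~R / 2)).
have ztail : forall i : 'I_n, (k < i)%N -> z ord0 i = 0.
  move=> i hi; rewrite z1 ?updE; last exact: ltnW.
  have -> : (i == k) = false.
    by apply/negbTE; apply/eqP => e3; move: hi; rewrite e3 ltnn.
  by rewrite mxE.
have zk : z ord0 k = (l k)%:~R / 2 by rewrite z1 // updE eqxx.
have Cz : C z.
  move=> j; case: (ltngtP j k) => hjk.
  - exact: fiber_ok (z2 j hjk).
  - rewrite ztail // A_zero_tail; last by move=> i hi; apply: ztail; exact: ltn_trans hjk hi.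
    by right; split => //; rewrite ler0z; apply: hj.
  - have -> : j = k by apply: val_inj.
    rewrite A_zero_tail // zk; left; split; lra.
have := H z Cz k; rewrite zk; lra.
Qed.

Lemma l_nonneg : (forall x, C x -> forall k, 0 <= x ord0 k) ->
  forall k : 'I_n, (0 <= l k)%R.
Proof.
move=> H.
have gen : forall m (k : 'I_n), (n <= k + m)%N -> (0 <= l k)%R.
  elim=> [|m IH] k hk.
    by move: (ltn_ord k) hk; rewrite addn0 => a b; have := leq_trans a b; rewrite ltnn.
  apply: (l_step H) => j hj; apply: IH.
  by rewrite (leq_trans hk) // addnS -addSn leq_add2r.
move=> k; apply: (gen n); exact: leq_addl.
Qed.

End Helpers.

Theorem theorem3p2 (R : realType) (n : nat) (c : 'I_n -> 'I_n -> int)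
  (l : 'I_n -> int) (hn : (1 <= n)%N) :
  (untwisted R c l ->
     convex_set (twisted_cube (R:=R) c l) /\ (forall k : 'I_n, 0 <= l k)) /\
  (convex_set (twisted_cube (R:=R) c l) -> (forall k : 'I_n, 0 < l k) ->
     untwisted R c l).
Proof.
split.
  move=> cl; have H := @nonneg_of_closed R n c l cl.
  split; last exact: (@l_nonneg R n c l H).
  have -> : twisted_cube c l = @Cpos R n c l by exact: (@C_pos_char R n c l H).
  exact: (@convex_pos R n c l).
move=> cv hl; have H := @nonneg_of_convex R n c l cv hl.
rewrite /untwisted.
have -> : twisted_cube c l = @Cpos R n c l by exact: (@C_pos_char R n c l H).
exact: (@closed_pos R n c l).
Qed.
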